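(* Let $G=(V,E)$ be a finite simple graph and let $C\subseteq V$. Let $x$ be an optimal solution of the integer program $$\text{minimize }\sum_{v\in V}x_v\ \text{ subject to }\ \sum_{v\in V}x_v\geq1,\quad x_u-x_v+\sum_{w\in N(u)\setminus\{v\}}x_w\geq0\ \ \forall v\in V,\ u\in N(v),\quad x_v=0\ \ \forall v\in C,\quad x\in\{0,1\}^V,$$ and let $F=\{v\in V\colon x_v=1\}$. Then $F$ is a fort of $G$ with $F\subseteq V\setminus\mathrm{cl}(C)$, and $F$ has minimum cardinality among all forts of $G$ contained in $V\setminus\mathrm{cl}(C)$.
   Context: $N(u)$ denotes the neighborhood of $u$. A fort of $G$ is a non-empty set $F\subseteq V$ such that no vertex $u\in V\setminus F$ has exactly one neighbor in $F$. The closure $\mathrm{cl}(C)$ is the set of filled vertices obtained by starting with the vertices of $C$ filled and repeatedly applying the standard color change rule (a filled vertex $u$ forces a non-filled vertex $v$ to become filled if $v$ is the only non-filled neighbor of $u$) until no more forces are possible. *)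

(* Defs.v *)
From mathcomp Require Import all_boot all_order all_algebra.
Set Implicit Arguments. Unset Strict Implicit. Unset Printing Implicit Defensive.
Import GRing.Theory Num.Theory.

(* A finite simple graph: vertex set a finType T, adjacency adj : rel T,
   assumed symmetric and irreflexive in the theorem. *)

Definition nbhd (T : finType) (adj : rel T) (u : T) : {set T} := [set w | adj u w].

Definition is_fort (T : finType) (adj : rel T) (F : {set T}) : Prop :=
  F != set0 /\ forall u, u \notin F -> #|nbhd adj u :&: F| != 1%N.

Definition force_step (T : finType) (adj : rel T) (S : {set T}) : {set T} :=
  S :|: [set v | [exists u, (u \in S) && (nbhd adj u :\: S == [set v])]].

(* Closure: apply forcing until no more forces are possible; after #|T|
   rounds the process has stabilised. *)
Definition zf_closure (T : finType) (adj : rel T) (C : {set T}) : {set T} :=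
  iter #|T| (force_step adj) C.

Definition ip_feasible (T : finType) (adj : rel T) (C : {set T}) (x : T -> int) : Prop :=
  [/\ (forall v, x v = 0 \/ x v = 1),
      (1 <= \sum_(v : T) x v)%R,
      (forall v u, u \in nbhd adj v ->
          (0 <= x u - x v + \sum_(w in nbhd adj u :\ v) x w)%R)
    & (forall v, v \in C -> x v = 0)].

Definition ip_optimal (T : finType) (adj : rel T) (C : {set T}) (x : T -> int) : Prop :=
  ip_feasible adj C x /\
  forall y : T -> int, ip_feasible adj C y -> (\sum_(v : T) x v <= \sum_(v : T) y v)%R.

(* Main.v *)
Require Import Defs.
From mathcomp Require Import all_boot all_order all_algebra.
Import GRing.Theory Num.Theory.
Local Open Scope ring_scope.

Lemma sum01 (T : finType) (x : T -> int) (A : {set T}) :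
  (forall v, x v = 0 \/ x v = 1) ->
  \sum_(w in A) x w = (#|A :&: [set v | x v == 1]|)%:Z.
Proof.
move=> H01.
rewrite (big_setID [set v | x v == 1]) /=.
rewrite [X in _ + X]big1 ?addr0; last first.
  move=> w; rewrite !inE => /andP[/negP nw _].
  by case: (H01 w) => // E; exfalso; apply: nw; rewrite E.
rewrite (eq_bigr (fun _ => 1)); last by move=> w; rewrite !inE => /andP[_ /eqP].
by rewrite sumr_const -natz.
Qed.

Lemma sumT (T : finType) (x : T -> int) :
  \sum_(v : T) x v = \sum_(v in [set: T]) x v.
Proof. by apply: eq_bigl => v; rewrite inE. Qed.

Lemma fs_keep (T : finType) (adj : rel T) (F S : {set T}) :
  is_fort adj F -> F \subset ~: S -> F \subset ~: force_step adj S.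
Proof.
move=> [_ Hf] FS; apply/subsetP => v vF.
have vS : v \notin S by have := subsetP FS v vF; rewrite inE.
rewrite /force_step !inE negb_or vS /=.
apply/existsP => [[u /andP[uS /eqP E]]].
have uF : u \notin F.
  by apply/negP => uF; have := subsetP FS u uF; rewrite inE uS.
have := Hf u uF.
suff -> : nbhd adj u :&: F = [set v] by rewrite cards1.
apply/setP => w; rewrite !inE.
have Ew : (w \in nbhd adj u :\: S) = (w \in [set v]) by rewrite E.
rewrite !inE in Ew.
case: (w =P v) => [->|nwv].
  have Ev : (v \in nbhd adj u :\: S) = (v \in [set v]) by rewrite E.
  rewrite !inE eqxx in Ev.
  by move/andP: Ev => [_ ->]; rewrite vF.
apply/negbTE; apply/negP => /andP[auw wF].
have wS : w \notin S by have := subsetP FS w wF; rewrite inE.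
by move: Ew; rewrite auw wS => /esym/eqP.
Qed.

Lemma clos_keep (T : finType) (adj : rel T) (F C : {set T}) :
  is_fort adj F -> F \subset ~: C -> F \subset ~: zf_closure adj C.
Proof.
move=> Hf FC; rewrite /zf_closure; elim: #|T| => [|n IH] //=.
exact: fs_keep.
Qed.

Lemma clos_ext (T : finType) (adj : rel T) (C : {set T}) :
  C \subset zf_closure adj C.
Proof.
rewrite /zf_closure; elim: #|T| => [|n IH] //=.
apply: subset_trans IH _; exact: subsetUl.
Qed.

Theorem corollary5p4 (T : finType) (adj : rel T)
  (adj_sym : symmetric adj) (adj_irr : irreflexive adj)
  (C : {set T}) (x : T -> int) :
  ip_optimal adj C x ->
  let F := [set v | x v == 1%R] in
  [/\ is_fort adj F,
      F \subset ~: zf_closure adj C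
    & forall F' : {set T}, is_fort adj F' -> F' \subset ~: zf_closure adj C ->
        (#|F| <= #|F'|)%N].
Proof.
move=> [[H01 Hsum Hc HC] Hopt] F.
have sumx : \sum_(v : T) x v = (#|F|)%:Z.
  rewrite sumT (@sum01 _ x _ H01) setTI //.
have fortF : is_fort adj F.
  split.
    apply/negP => /eqP F0; move: Hsum; rewrite sumx F0 cards0 //.
  move=> u uF; apply/negP => /cards1P [v Ev].
  have vN : v \in nbhd adj u :&: F by rewrite Ev set11.
  move: vN; rewrite !inE => /andP[auv xv].
  have := Hc v u; rewrite !inE adj_sym auv => /(_ isT).
  have xu : x u = 0.
    by case: (H01 u) => // E; move: uF; rewrite /F inE E eqxx.
  rewrite (@sum01 _ x _ H01) xu (eqP xv).
  have -> : (nbhd adj u :\ v) :&: [set v0 | x v0 == 1] = set0.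
    apply/setP => w; rewrite !inE.
    apply/negbTE/negP => /andP[/andP[nwv auw] xw].
    have : w \in nbhd adj u :&: F by rewrite !inE auw.
    by rewrite Ev inE (negbTE nwv).
  by rewrite cards0.
have FC : F \subset ~: C.
  apply/subsetP => v; rewrite !inE; apply: contraL => vC.
  by rewrite (HC v vC).
split => //; first exact: clos_keep.
move=> F' fF' F'cl.
have F'C : F' \subset ~: C.
  apply: subset_trans F'cl _; rewrite setCS; exact: clos_ext.
pose y := fun v => if v \in F' then (1 : int) else 0.
have y01 : forall v, y v = 0 \/ y v = 1.
  by move=> v; rewrite /y; case: (v \in F'); [right|left].
have yF : [set v | y v == 1] = F'.
  by apply/setP => v; rewrite !inE /y; case: (v \in F').
have sumy : \sum_(v : T) y v = (#|F'|)%:Z.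
  by rewrite sumT (@sum01 _ y _ y01) setTI yF.
suff : \sum_(v : T) x v <= \sum_(v : T) y v by rewrite sumx sumy lez_nat.
apply: Hopt; split => //.
- rewrite sumy lez_nat card_gt0; by case: fF'.
- move=> v u; rewrite inE => avu.
  rewrite (@sum01 _ y _ y01) yF /y.
  case uF': (u \in F'); first by case: (v \in F') => //.
  case vF': (v \in F'); last by rewrite subr0 add0r.
  rewrite sub0r.
  have := (proj2 fF') u (negbT uF').
  have : v \in nbhd adj u :&: F' by rewrite !inE adj_sym avu vF'.
  rewrite (cardsD1 v (nbhd adj u :&: F')) => ->.
  have -> : (nbhd adj u :&: F') :\ v = (nbhd adj u :\ v) :&: F'.
    by apply/setP => w; rewrite !inE andbA.
  case: #|_| => // n _.
- move=> v vC; rewrite /y; case vF': (v \in F') => //.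
  by have := subsetP F'C v vF'; rewrite inE vC.
Qed.
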